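(* Suppose we have $n\ge3$ agents with additive, identical, normalized valuations, provided with a prediction of accuracy $\eta<1-\frac{1-a^2}{4+(2n-3)a}$ for some given $a\in(0,1]$; that is, the allowed error between the prediction and the true valuation is $1-\eta>\frac{1-a^2}{4+(2n-3)a}$. Then there is no online algorithm that guarantees an $a$-EFX allocation for all instances with error at most $1-\eta$, even when $T'=T=2n-1$ and the prediction and the true valuation are $3$-value functions.
   Context: Online fair division with predictions and identical valuations: agents $[n]$; goods $g_1,\dots,g_T$ arrive one per time step; all agents share a true additive normalized valuation $v$ ($v(g_t)\ge0$, $\sum_{t\in[T]}v(g_t)=1$, $v(S)=\sum_{g\in S}v(g)$), and before any arrival the algorithm receives a prediction $p=(p(g_1),\dots,p(g_{T'}))$ (an additive normalized valuation over $T'$ predicted goods) and the accuracy level. Error $\frac12\sum_{t=1}^{\max\{T,T'\}}|p(g_t)-v(g_t)|$ (missing entries set to $0$); accuracy $\eta$ means the error is at most $1-\eta$. At time $t$, $v(g_t)$ is revealed and $g_t$ must be irrevocably allocated. For $S\ne\emptyset$, $\bar S=S\setminus\{g\}$ with $g\in\arg\max_{g'\in S}v(S\setminus\{g'\})$, $\bar\emptyset=\emptyset$. An allocation is $a$-EFX if $v(A_i)\ge a\cdot v(\bar A_j)$ for all $i,j$. A function is $k$-value if it takes at most $k$ distinct values. *)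

(* Defs.v *)
From HB Require Import structures.
From mathcomp Require Import all_boot all_order all_algebra.
From mathcomp Require Import reals.
Set Implicit Arguments. Unset Strict Implicit. Unset Printing Implicit Defensive.
Import Order.TTheory GRing.Theory Num.Theory.
Local Open Scope ring_scope.

Section Defs.
Variable R : realType.
Variable T : nat.

(* additive valuation on goods 'I_T, given by the values of single goods *)
Definition normalized (v : 'I_T -> R) : Prop :=
  (forall t, 0 <= v t) /\ \sum_(t < T) v t = 1.

Definition kvalue (k : nat) (v : 'I_T -> R) : Prop :=
  (size (undup [seq v t | t <- enum 'I_T]) <= k)%N.

(* error (T' = T): 1/2 * sum_t |p t - v t| *)
Definition pred_error (p v : 'I_T -> R) : R :=
  2^-1 * \sum_(t < T) `|p t - v t|.

Definition val_set (v : 'I_T -> R) (S : {set 'I_T}) : R := \sum_(t in S) v t.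

Definition val_bar (v : 'I_T -> R) (S : {set 'I_T}) : R :=
  \big[Num.max/0]_(g in S) val_set v (S :\ g).

Variable n : nat.

Definition bundle (A : 'I_T -> 'I_n) (i : 'I_n) : {set 'I_T} := [set t | A t == i].

Definition aEFX (a : R) (v : 'I_T -> R) (A : 'I_T -> 'I_n) : Prop :=
  forall i j : 'I_n, a * val_bar v (bundle A j) <= val_set v (bundle A i).

(* online algorithm (deterministic): knows the prediction and the values
   of the goods arrived so far (including the current one), outputs an agent *)
Definition online_alg := ('I_T -> R) -> seq R -> 'I_n.

Definition prefix (v : 'I_T -> R) (t : 'I_T) : seq R :=
  map v [seq s <- enum 'I_T | (nat_of_ord s <= nat_of_ord t)%N].

Definition run (alg : online_alg) (p v : 'I_T -> R) : 'I_T -> 'I_n :=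
  fun t => alg p (prefix v t).
End Defs.

(* Main.v *)
Require Import Defs.
From HB Require Import structures.
From mathcomp Require Import all_boot all_order all_algebra.
From mathcomp Require Import reals.
From mathcomp Require Import lra zify.
Import Order.TTheory GRing.Theory Num.Theory.
Local Open Scope ring_scope.
Set Implicit Arguments. Unset Strict Implicit. Unset Printing Implicit Defensive.

Definition mkv (R : realType) (m : nat) (s u w : R) : 'I_(m.+2) -> R :=
  fun t => if (t < m)%N then s else if (nat_of_ord t == m) then u else w.

Definition um (m : nat) : 'I_(m.+2) := Ordinal (leqnSn m.+1).
Definition ul (m : nat) : 'I_(m.+2) := ord_max.

Lemma ord_cases (m : nat) (t : 'I_(m.+2)) : [\/ (t < m)%N, t = um m | t = ul m].
Proof.
case: (ltnP t m) => h; first by constructor 1.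
have := ltn_ord t; rewrite ltnS leq_eqVlt ltnS => /orP [/eqP e|h2].
  by constructor 3; apply: val_inj.
by constructor 2; apply: val_inj => /=; apply/eqP; rewrite eqn_leq h2 h.
Qed.

Lemma mkv_s (R : realType) m (s u w : R) (t : 'I_(m.+2)) : (t < m)%N -> mkv s u w t = s.
Proof. by rewrite /mkv => ->. Qed.
Lemma mkv_um (R : realType) m (s u w : R) : mkv s u w (um m) = u.
Proof. by rewrite /mkv /= ltnn eqxx. Qed.
Lemma mkv_ul (R : realType) m (s u w : R) : mkv s u w (ul m) = w.
Proof.
rewrite /mkv /= ltnNge leqW // /=.
by case: eqP => // h; move: (n_Sn m); rewrite h.
Qed.

Lemma sum_mkv (R : realType) m (s u w : R) : \sum_(t < m.+2) mkv s u w t = m%:R * s + u + w.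
Proof.
rewrite 2!big_ord_recr /=.
have -> : (widen_ord (leqnSn m.+1) ord_max) = um m by apply: val_inj.
have -> : (ord_max : 'I_m.+2) = ul m by [].
rewrite mkv_um mkv_ul.
congr (_ + _ + _).
rewrite (eq_bigr (fun _ => s)); last by move=> i _; apply: mkv_s => /=.
by rewrite sumr_const card_ord mulr_natl.
Qed.

Lemma sum_abs_mkv (R : realType) m (s u w u' w' : R) :
  \sum_(t < m.+2) `|mkv s u w t - mkv s u' w' t| = `|u - u'| + `|w - w'|.
Proof.
rewrite 2!big_ord_recr /=.
have -> : (widen_ord (leqnSn m.+1) ord_max) = um m by apply: val_inj.
have -> : (ord_max : 'I_m.+2) = ul m by [].
rewrite !mkv_um !mkv_ul.
rewrite big1 ?add0r // => i _.
by rewrite !mkv_s /= ?subrr ?normr0.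
Qed.

Lemma kvalue_mkv (R : realType) (m : nat) (s u w : R) : kvalue 3 (@mkv R m s u w).
Proof.
rewrite /kvalue.
apply: (@leq_trans (size [:: s; u; w])) => //.
apply: uniq_leq_size; first exact: undup_uniq.
move=> z; rewrite mem_undup => /mapP [t _ ->].
rewrite /mkv !inE; case: ifP => _; first by rewrite eqxx.
by case: ifP => _; rewrite eqxx ?orbT.
Qed.

Lemma val_sub (R : realType) T (v : 'I_T -> R) (X S : {set 'I_T}) :
  (forall t, 0 <= v t) -> X \subset S -> val_set v X <= val_set v S.
Proof.
move=> v0 /subsetP sub; rewrite /val_set.
rewrite [X in X <= _]big_mkcond [X in _ <= X]big_mkcond /=.
apply: ler_sum => t _.
case: ifP => hX; first by rewrite (sub _ hX).
by case: ifP.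
Qed.

Lemma bar_ge (R : realType) T (v : 'I_T -> R) (S : {set 'I_T}) g :
  g \in S -> val_set v (S :\ g) <= val_bar v S.
Proof.
rewrite /val_bar => gS.
have : g \in index_enum 'I_T by rewrite mem_index_enum.
elim: (index_enum 'I_T) => // h r IH.
rewrite inE big_cons => /orP [/eqP <-|].
  by rewrite gS le_max lexx.
move=> /IH H; case: ifP => // _.
by rewrite le_max H orbT.
Qed.

Lemma val_const (R : realType) T (v : 'I_T -> R) (X : {set 'I_T}) c :
  (forall t, t \in X -> v t = c) -> val_set v X = #|X|%:R * c.
Proof.
move=> h; rewrite /val_set (eq_bigr (fun _ => c)) //.
by rewrite sumr_const mulr_natl.
Qed.

Lemma val_set1 (R : realType) T (v : 'I_T -> R) g : val_set v [set g] = v g.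
Proof. by rewrite /val_set big_set1. Qed.

Lemma sum_split2 (n : nat) (e1 e2 : 'I_n) (f : 'I_n -> nat) : e1 != e2 ->
  (\sum_i f i = f e1 + f e2 + \sum_(i | (i != e1) && (i != e2)) f i)%N.
Proof.
move=> ne; rewrite (bigD1 e1) //= (bigD1 e2) /=; last by rewrite eq_sym.
by rewrite addnA.
Qed.

Lemma sum_const_n (n c : nat) : (\sum_(i : 'I_n) c = n * c)%N.
Proof. by rewrite sum_nat_const card_ord. Qed.

Lemma count_s (n m : nat) (A0 : 'I_m.+2 -> 'I_n) :
  (\sum_(i : 'I_n) #|[set t : 'I_m.+2 | (t < m)%N && (A0 t == i)]| = m)%N.
Proof.
transitivity (\sum_(j : 'I_n) \sum_(t : 'I_m.+2 | (t < m)%N && (A0 t == j)) 1)%N.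
  by apply: eq_bigr => j _; rewrite -sum1_card; apply: eq_bigl => t; rewrite inE.
rewrite -(partition_big A0 xpredT) //.
have := @big_ord_widen_cond _ 0 addn _ _ xpredT (fun _ => 1%N) (leqW (leqnSn m)).
rewrite /= => <-.
by rewrite sum_const_n muln1.
Qed.

Lemma adversary (R : realType) (n m : nat) (a s x M : R) (p : 'I_m.+2 -> R)
  (alg : online_alg R m.+2 n) :
  (3 <= n)%N -> (m + 3 = 2 * n)%N -> 0 < a -> 0 < s -> 0 <= x -> x < 2 * a * s ->
  4 * s < a * M -> x <= M / 2 ->
  exists2 v, (v = mkv s x (M - x) \/ v = mkv s (M / 2) (M / 2)) &
    ~ aEFX a v (run alg p v).
Proof.
move=> n3 hm a0 s0 x0 x2 sM xM.
have M0 : 0 < M by rewrite -(pmulr_rgt0 _ a0); lra.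
set vA := mkv s x (M - x).
set vB := mkv s (M / 2) (M / 2).
set A0 := run alg p vA.
have agree : forall v : 'I_m.+2 -> R, (forall t : 'I_m.+2, (t < m)%N -> v t = s) ->
    forall t : 'I_m.+2, (t < m)%N -> run alg p v t = A0 t.
  move=> v hv t ht; rewrite /A0 /run; congr (alg p _); rewrite /prefix.
  apply/eq_in_map => t'; rewrite mem_filter => /andP [h _].
  rewrite hv; last lia.
  by rewrite /vA /mkv (_ : (t' < m)%N = true) //; lia.
set S := fun i => [set t : 'I_m.+2 | (t < m)%N && (A0 t == i)].
set k := fun i => #|S i|.
have sumk : (\sum_i k i = m)%N by apply: count_s.
have Ssub : forall i t, t \in S i -> (t < m)%N /\ A0 t = i.
  by move=> i t; rewrite inE => /andP [h /eqP].
case: (boolP [exists e1 : 'I_n, exists e2 : 'I_n, [&& e1 != e2, k e1 == 0%N & k e2 == 0%N]]).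
- move=> /existsP [e1 /existsP [e2 /and3P [ne /eqP k1 /eqP k2]]].
  exists vA; first by left.
  have [j kj] : exists j, (3 <= k j)%N.
    case: (boolP [exists j, (3 <= k j)%N]) => [/existsP //|/existsPn hall].
    exfalso.
    have E1 := sum_split2 k ne.
    have E2 := sum_split2 (fun _ => 2%N) ne.
    rewrite sum_const_n in E2.
    have le : (\sum_(i | (i != e1) && (i != e2)) k i <= \sum_(i | (i != e1) && (i != e2)) 2)%N.
      by apply: leq_sum => i _; have := hall i; rewrite -ltnNge ltnS.
    lia.
  set i := if A0 (ul m) == e1 then e2 else e1.
  have ki : k i = 0%N by rewrite /i; case: ifP.
  have iu : A0 (ul m) != i.
    rewrite /i; case: ifP => [/eqP E|/negbT //]; by rewrite E.
  have vA0 : forall t, 0 <= vA t.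
    move=> t; rewrite /vA /mkv; case: ifP => _; first lra.
    case: ifP => _; lra.
  move=> H; have := H i j; apply/negP; rewrite -ltNge.
  have -> : run alg p vA = A0 by [].
  apply: (@le_lt_trans _ _ x).
    apply: (@le_trans _ _ (val_set vA [set um m])); last by rewrite val_set1 /vA mkv_um.
    apply: val_sub => //; apply/subsetP => t; rewrite inE => /eqP At.
    case: (ord_cases t) => [ht|->|ht]; first last.
    + by move: iu; rewrite -ht At eqxx.
    + by rewrite inE.
    + have : t \in S i by rewrite inE ht At eqxx.
      by move: ki; rewrite /k => /eqP; rewrite cards_eq0 => /eqP ->; rewrite inE.
  have [g0 g0S] : exists g0, g0 \in S j by apply/card_gt0P; rewrite -/(k j); lia.
  have gb : g0 \in bundle A0 j by rewrite inE; have [_ ->] := Ssub _ _ g0S.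
  have := bar_ge vA gb.
  have sub : S j :\ g0 \subset bundle A0 j :\ g0.
    by apply/subsetP => t; rewrite !inE => /andP [-> /andP [_ ->]].
  have := val_sub vA0 sub.
  rewrite (@val_const _ _ _ _ s); last first.
    by move=> t; rewrite inE => /andP [_ tS]; have [ht _] := Ssub _ _ tS; exact: mkv_s.
  have c2 : (2 <= #|S j :\ g0|)%N.
    have := cardsD1 g0 (S j); rewrite g0S -/(k j); lia.
  have : (2%:R : R) <= #|S j :\ g0|%:R by rewrite ler_nat.
  move=> c2R h1 h2.
  have : 2 * s <= val_bar vA (bundle A0 j).
    apply: le_trans h2; apply: le_trans h1; apply: ler_wpM2r; lra.
  move=> h3; have : a * (2 * s) <= a * val_bar vA (bundle A0 j) by apply: ler_wpM2l; lra.
  lra.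
- move=> /existsPn hne.
  have one_empty : forall e1 e2, e1 != e2 -> (0 < k e1)%N || (0 < k e2)%N.
    move=> e1 e2 ne; have := hne e1; move=> /existsPn /(_ e2).
    by rewrite ne /= !lt0n negb_and.
  exists vB; first by right.
  have vB0 : forall t, 0 <= vB t.
    move=> t; rewrite /vB /mkv; case: ifP => _; first lra.
    case: ifP => _; lra.
  set B := run alg p vB.
  have BA : forall t : 'I_m.+2, (t < m)%N -> B t = A0 t.
    by apply: agree => t ht; exact: mkv_s.
  set j1 := B (um m).
  set j2 := B (ul m).
  have [o ho] : exists o : 'I_n, o != j1.
    have h0 : (0 < n)%N by lia.
    have h1 : (1 < n)%N by lia.
    case: (eqVneq j1 (Ordinal h0)) => E.
      by exists (Ordinal h1); rewrite E; apply/eqP => /(congr1 val).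
    by exists (Ordinal h0); rewrite eq_sym.
  set j2' := if j1 != j2 then j2 else o.
  have ne12 : j1 != j2' by rewrite /j2'; case: ifP => // _; rewrite eq_sym.
  have [i /and3P [ij1 ij2 ki]] : exists i, [&& i != j1, i != j2' & (k i <= 2)%N].
    case: (boolP [exists i, [&& i != j1, i != j2' & (k i <= 2)%N]]) => [/existsP //|/existsPn hall].
    exfalso.
    have E1 := sum_split2 k ne12.
    have E2 := sum_split2 (fun _ => 3%N) ne12.
    rewrite sum_const_n in E2.
    have le : (\sum_(i | (i != j1) && (i != j2')) 3 <= \sum_(i | (i != j1) && (i != j2')) k i)%N.
      apply: leq_sum => i /andP [h1 h2]; have := hall i; rewrite h1 h2 /= -ltnNge.
      done.
    have := one_empty _ _ ne12.
    rewrite !lt0n => /orP [h|h]; lia.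
  have ij2b : i != j2.
    move: ij2; rewrite /j2'; case: ifP => [_ //|/negbFE /eqP <- _ //].
  move=> H; have := H i.
  have vi : val_set vB (bundle B i) <= 2 * s.
    apply: (@le_trans _ _ (val_set vB (S i))).
      apply: val_sub => //; apply/subsetP => t; rewrite inE => /eqP Bt.
      case: (ord_cases t) => [ht|ht|ht].
      + by rewrite inE ht -BA // Bt eqxx.
      + by move: ij1; rewrite -Bt ht eqxx.
      + by move: ij2b; rewrite -Bt ht eqxx.
    rewrite (@val_const _ _ _ _ s); last first.
      by move=> t tS; have [ht _] := Ssub _ _ tS; exact: mkv_s.
    have : (#|S i|%:R : R) <= 2%:R by rewrite ler_nat.
    move=> h; apply: ler_wpM2r; lra.
  have [j hj] : exists j, M / 2 <= val_bar vB (bundle B j).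
    suff [j [g0 [g [g0b gb gv]]]] : exists j g0 g, [/\ g0 \in bundle B j,
        g \in bundle B j :\ g0 & vB g = M / 2].
      exists j; apply: le_trans (bar_ge vB g0b).
      rewrite -gv -(val_set1 vB g); apply: val_sub => //.
      by rewrite sub1set.
    case: (eqVneq j1 j2) => E.
      exists j1, (ul m), (um m); split.
      + by rewrite inE -/j2 E.
      + rewrite !inE eqxx andbT; apply/eqP => /(congr1 val) /=.
        by move/eqP; rewrite eqn_leq ltnn andbF.
      + exact: mkv_um.
    have := one_empty _ _ E; move=> /orP [h|h].
      have [g0 g0S] : exists g0, g0 \in S j1 by apply/card_gt0P.
      have [g0m g0A] := Ssub _ _ g0S.
      exists j1, g0, (um m); split.
      + by rewrite inE BA // g0A.
      + rewrite !inE eqxx andbT; apply/eqP => /(congr1 val) /= h'.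
        by move: g0m; rewrite -h' ltnn.
      + exact: mkv_um.
    have [g0 g0S] : exists g0, g0 \in S j2 by apply/card_gt0P.
    have [g0m g0A] := Ssub _ _ g0S.
    exists j2, g0, (ul m); split.
    + by rewrite inE BA // g0A.
    + rewrite !inE eqxx andbT; apply/eqP => /(congr1 val) /= h'.
      by move: g0m; rewrite -h' ltnNge leqW.
    + exact: mkv_ul.
  move=> /(_ j) hle.
  have : a * (M / 2) <= a * val_bar vB (bundle B j) by apply: ler_wpM2l; lra.
  lra.
Qed.
Lemma numeric (R : realType) (N a d : R) : 3 <= N -> 0 < a -> a <= 1 ->
  (1 - a ^+ 2) / (4 + N * a) < d ->
  exists s x M : R, [/\ 0 < s, 0 <= x, x < 2 * a * s, 4 * s < a * M &
     x <= M / 2] /\ (N * s + M = 1 /\ (M / 2 - x) / 2 <= d).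
Proof.
move=> N3 a0 a1 hd.
have D0 : 0 < 4 + N * a by nra.
have [t [t0 tD hd']] : exists t, [/\ 0 < t, t * (4 + N * a) = 1 & (1 - a ^+ 2) * t < d].
  exists (4 + N * a)^-1; split => //; first by rewrite invr_gt0.
  by rewrite mulVf // gt_eqF.
have [mu [mu0 mug mu2]] : exists mu, [/\ 0 < mu, mu <= d - (1 - a ^+ 2) * t & mu <= 1/2].
  exists (Num.min (d - (1 - a ^+ 2) * t) (1/2)); split.
  - rewrite lt_min; apply/andP; split; lra.
  - by rewrite ge_min lexx.
  - by rewrite ge_min lexx orbT.
have Nat : N * a * t <= 1 by lra.
have at0 : 0 < a * t by nra.
have s0 : 0 < (1 - mu) * a * t by rewrite -mulrA mulr_gt0 //; lra.
have sD : (1 - mu) * a * t * (4 + N * a) = (1 - mu) * a by rewrite -mulrA tD mulr1.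
have amu : 0 < a * ((1 - mu) * a * t) * mu by rewrite !mulr_gt0 //; lra.
have mua : 0 < mu * a by rewrite mulr_gt0.
have sM : 4 * ((1 - mu) * a * t) < a * (1 - N * ((1 - mu) * a * t)) by lra.
have M0 : 0 < 1 - N * ((1 - mu) * a * t).
  have : a * (1 - N * ((1 - mu) * a * t)) > 0 by lra.
  by rewrite pmulr_rgt0.
have aM : a * (1 - N * ((1 - mu) * a * t)) <= 1 - N * ((1 - mu) * a * t).
  by rewrite ger_pMl.
have al : a * (1 - mu) * ((1 - mu) * a * t) <= (1 - mu) * a * t.
  apply: ler_piMl; first lra.
  nra.
have t4 : t <= 1/4 by nra.
have h1 : N * a * t * mu <= mu by apply: ler_piMl => //; lra.
have h2 : a ^+ 2 * t * (mu * (2 - mu)) <= mu / 2.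
  have : a ^+ 2 * t <= 1/4 by nra.
  have : mu * (2 - mu) <= 2 * mu by nra.
  have : 0 <= mu * (2 - mu) by nra.
  nra.
exists ((1 - mu) * a * t), (2 * a * (1 - mu) * ((1 - mu) * a * t)), (1 - N * ((1 - mu) * a * t)).
split; [split | split].
- by [].
- have : 0 <= a * (1 - mu) * ((1 - mu) * a * t) by rewrite !mulr_ge0 //; lra.
  lra.
- lra.
- by [].
- lra.
- lra.
- lra.
Qed.

Theorem lemma4p8 (R : realType) (n : nat) (a eta : R) :
  (3 <= n)%N -> 0 < a -> a <= 1 ->
  (1 - a ^+ 2) / (4 + (2 * n%:R - 3) * a) < 1 - eta ->
  forall alg : online_alg R (2 * n - 1) n,
  exists p v : 'I_(2 * n - 1) -> R,
    [/\ normalized p /\ normalized v, kvalue 3 p /\ kvalue 3 v,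
        pred_error p v <= 1 - eta &
        ~ aEFX a v (run alg p v)].
Proof.
move=> n3 a0 a1 hlt.
have hT : (2 * n - 1 = (2 * n - 3).+2)%N by lia.
rewrite hT => alg.
set m := (2 * n - 3)%N.
have Nm : (m%:R : R) = 2 * n%:R - 3.
  have -> : m = (2 * n - 3)%N by [].
  rewrite natrB; last by lia.
  by rewrite natrM.
have N3 : 3 <= (m%:R : R) by rewrite ler_nat; lia.
rewrite -Nm in hlt.
have [s [x [M [[s0 x0 x2 sM xM] [sum1 err]]]]] := numeric N3 a0 a1 hlt.
pose p := @mkv R m s ((x + M / 2) / 2) (M - (x + M / 2) / 2).
have hm : (m + 3 = 2 * n)%N by rewrite /m; lia.
have [v hv nv] := adversary p alg n3 hm a0 s0 x0 x2 sM xM.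
have M0 : 0 < M.
  have : 0 < a * M by lra.
  by rewrite pmulr_rgt0.
exists p, v; split => //.
- split.
  + split.
      move=> t; rewrite /p /mkv; case: ifP => _; first lra.
      case: ifP => _; lra.
    rewrite /p sum_mkv; lra.
  + case: hv => ->; split.
    * move=> t; rewrite /mkv; case: ifP => _; first lra.
      case: ifP => _; lra.
    * rewrite sum_mkv; lra.
    * move=> t; rewrite /mkv; case: ifP => _; first lra.
      case: ifP => _; lra.
    * rewrite sum_mkv; lra.
- split; first exact: kvalue_mkv.
  by case: hv => ->; exact: kvalue_mkv.
- case: hv => ->; rewrite /pred_error /p sum_abs_mkv.
  + have h1 : `|(x + M / 2) / 2 - x| <= (M / 2 - x) / 2.
      by rewrite ler_norml; apply/andP; split; lra.
    have h2 : `|M - (x + M / 2) / 2 - (M - x)| <= (M / 2 - x) / 2.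
      by rewrite ler_norml; apply/andP; split; lra.
    lra.
  + have h1 : `|(x + M / 2) / 2 - M / 2| <= (M / 2 - x) / 2.
      by rewrite ler_norml; apply/andP; split; lra.
    have h2 : `|M - (x + M / 2) / 2 - M / 2| <= (M / 2 - x) / 2.
      by rewrite ler_norml; apply/andP; split; lra.
    lra.
Qed.
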